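(* Let $P,R,Q$ be polytopes with $R\subset Q$, and let $m\ge2$. (a) If $f\in\operatorname{vert}(P,Q)$ and $f(P)\subset R$, then $f\in\operatorname{vert}(P,R)$. (b) If $P$ is centrally symmetric, $f\in\operatorname{vert}(\Diamond_m,P)$ and $f(0)$ is the center of $P$, then $f(\operatorname{vert}(\Diamond_m))\subset\operatorname{vert}(P)$. (c) If $f\in\operatorname{vert}(\Diamond_m,P)$, then $f(\operatorname{vert}(\Diamond_m))=\operatorname{vert}(f(\Diamond_m))\subset\operatorname{vert}\big(P\cap(2f(0)-P)\big)$.
   Context: For convex polytopes $P,Q$, $\operatorname{Hom}(P,Q)$ is the set of maps $P\to Q$ that are restrictions of affine maps $\operatorname{Aff}(P)\to\operatorname{Aff}(Q)$; it is a convex polytope in the affine space of affine maps $\operatorname{Aff}(P)\to\operatorname{Aff}(Q)$, and $\operatorname{vert}(P,Q)$ denotes its set of vertices. $\operatorname{vert}(X)$ denotes the vertex set of a polytope $X$. $\Diamond_m=\operatorname{conv}(\pm e_1,\ldots,\pm e_m)\subset\mathbb{R}^m$, and $2f(0)-P=\{2f(0)-x:x\in P\}$. *)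

(* Defs.v *)
From HB Require Import structures.
From mathcomp Require Import all_boot all_order all_algebra.
From mathcomp Require Import boolp classical_sets reals.
Set Implicit Arguments. Unset Strict Implicit. Unset Printing Implicit Defensive.
Import Order.TTheory GRing.Theory Num.Theory.
Local Open Scope ring_scope.
Local Open Scope classical_set_scope.

Section Polytopes.
Variable R : realType.

Definition conv n (s : seq 'rV[R]_n) : set 'rV[R]_n :=
  [set x | exists w : 'I_(size s) -> R,
      (forall i, 0 <= w i) /\ \sum_i w i = 1 /\ x = \sum_i w i *: s`_i].

Definition is_polytope n (P : set 'rV[R]_n) : Prop :=
  exists s : seq 'rV[R]_n, P = conv s.

Definition vert n (X : set 'rV[R]_n) : set 'rV[R]_n :=
  [set x | X x /\ forall y z (t : R), X y -> X z -> 0 < t < 1 ->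
      x = t *: y + (1 - t) *: z -> y = z].

(* f : P -> Q is in Hom(P,Q): f restricted to P is the restriction of an
   affine map, and f maps P into Q.  Maps are identified by their values on P. *)
Definition is_hom n k (P : set 'rV[R]_n) (Q : set 'rV[R]_k)
    (f : 'rV[R]_n -> 'rV[R]_k) : Prop :=
  (exists (M : 'M[R]_(n, k)) (b : 'rV[R]_k), forall x, P x -> f x = x *m M + b)
  /\ (forall x, P x -> Q (f x)).

Definition vert_hom n k (P : set 'rV[R]_n) (Q : set 'rV[R]_k)
    (f : 'rV[R]_n -> 'rV[R]_k) : Prop :=
  is_hom P Q f /\
  forall g h (t : R), is_hom P Q g -> is_hom P Q h -> 0 < t < 1 ->
    (forall x, P x -> f x = t *: g x + (1 - t) *: h x) ->
    forall x, P x -> g x = h x.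

Definition diamond m : set 'rV[R]_m :=
  conv ([seq delta_mx 0 i | i : 'I_m] ++ [seq - delta_mx 0 i | i : 'I_m]).

End Polytopes.

(* Main.v *)
Require Import Defs.
From HB Require Import structures.
From mathcomp Require Import all_boot all_order all_algebra.
From mathcomp Require Import boolp classical_sets reals.
From mathcomp Require Import ring lra.
Set Implicit Arguments. Unset Strict Implicit. Unset Printing Implicit Defensive.
Import Order.TTheory GRing.Theory Num.Theory.
Local Open Scope ring_scope.
Local Open Scope classical_set_scope.
Definition convexS (R : realType) n (C : set 'rV[R]_n) :=
  forall x y (t : R), C x -> C y -> 0 <= t <= 1 -> C (t *: x + (1 - t) *: y).

Lemma convex_comb (R : realType) n (C : set 'rV[R]_n) : convexS C ->
  forall k (w : 'I_k -> R) (p : 'I_k -> 'rV[R]_n),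
  (forall i, 0 <= w i) -> \sum_i w i = 1 -> (forall i, C (p i)) ->
  C (\sum_i w i *: p i).
Proof.
move=> cC; elim=> [|k IH] w p w0 w1 pC.
  by move: w1; rewrite big_ord0 => /eqP; rewrite eq_sym oner_eq0.
rewrite big_ord_recr /=; move: w1; rewrite big_ord_recr /= => w1.
set s := \sum_(i < k) w (widen_ord (leqnSn k) i) in w1 *.
have s0 : 0 <= s by apply: sumr_ge0 => i _.
have wl : w ord_max = 1 - s by rewrite -w1; ring.
have [s00|sn0] := eqVneq s 0.
  have wz : forall i : 'I_k, w (widen_ord (leqnSn k) i) = 0.
    by move=> i; apply: (psumr_eq0P (P:=predT) (fun i _ => w0 _) s00).
  rewrite big1 ?add0r; last by move=> i _; rewrite wz scale0r.
  by rewrite wl s00 subr0 scale1r.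
have sp : 0 < s by rewrite lt_def sn0 s0.
have -> : \sum_(i < k) w (widen_ord (leqnSn k) i) *: p (widen_ord (leqnSn k) i)
   = s *: \sum_(i < k) (w (widen_ord (leqnSn k) i) / s) *: p (widen_ord (leqnSn k) i).
  rewrite scaler_sumr; apply: eq_bigr => i _; rewrite scalerA.
  by congr (_ *: _); rewrite mulrC -mulrA mulVf ?mulr1.
rewrite wl; apply: cC; [apply: IH| exact: pC|].
- by move=> i; rewrite divr_ge0.
- by rewrite -mulr_suml -/s divff.
- by move=> i; exact: pC.
- apply/andP; split=> //; rewrite -w1 lerDl; exact: w0.
Qed.
Lemma conv_convex (R : realType) n (s : seq 'rV[R]_n) : convexS (conv s).
Proof.
move=> x y t [w [w0 [w1 ->]]] [v [v0 [v1 ->]]] /andP[t0 t1].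
exists (fun i => t * w i + (1 - t) * v i); split; [|split].
- by move=> i; rewrite addr_ge0 // mulr_ge0 // subr_ge0.
- by rewrite big_split /= -!mulr_sumr w1 v1; ring.
- rewrite !scaler_sumr -big_split /=; apply: eq_bigr => i _.
  by rewrite !scalerA scalerDl.
Qed.

Lemma conv_mem (R : realType) n (s : seq 'rV[R]_n) x : x \in s -> conv s x.
Proof.
move=> xs; have jlt : (index x s < size s)%N by rewrite index_mem.
exists (fun i : 'I_(size s) => (i == Ordinal jlt)%:R); split; [|split].
- by move=> i; rewrite ler0n.
- by rewrite (bigD1 (Ordinal jlt)) //= eqxx big1 ?addr0 // => i /negbTE ->.
- rewrite (bigD1 (Ordinal jlt)) //= eqxx scale1r big1 ?addr0 ?nth_index //.
  by move=> i /negbTE ->; rewrite scale0r.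
Qed.

Lemma conv_sub (R : realType) n (s : seq 'rV[R]_n) (C : set 'rV[R]_n) :
  convexS C -> (forall x, x \in s -> C x) -> conv s `<=` C.
Proof.
move=> cC sC x [w [w0 [w1 ->]]]; apply: convex_comb => // i.
by apply: sC; rewrite mem_nth.
Qed.
Lemma vert_conv (R : realType) n (s : seq 'rV[R]_n) x : vert (conv s) x -> x \in s.
Proof.
move=> [[w [w0 [w1 xE]]] ext].
have [j wj] : exists j, 0 < w j.
  case: (boolP [exists j, 0 < w j]) => [/existsP//|]; rewrite negb_exists => /forallP H.
  move: w1; rewrite big1 => [/eqP|i _]; first by rewrite eq_sym oner_eq0.
  by apply/eqP; rewrite eq_le w0 andbT leNgt H.
have xD : x = w j *: s`_j + \sum_(i | i != j) w i *: s`_i by rewrite xE (bigD1 j).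
have w1' : w j + \sum_(i | i != j) w i = 1 by rewrite -w1 [in RHS](bigD1 j).
have sjc : conv s s`_j by apply: conv_mem; rewrite mem_nth.
have [wj1|wjn1] := eqVneq (w j) 1.
  have H0 : \sum_(i | i != j) w i = 0 by move: w1'; rewrite wj1 => /(canRL (addKr 1)); rewrite addNr.
  rewrite xD wj1 scale1r big1 ?addr0 ?mem_nth // => i ij.
  by rewrite (psumr_eq0P (fun i _ => w0 i) H0) // scale0r.
have wjl : w j < 1.
  rewrite lt_def eq_sym wjn1 /= -w1' lerDl; exact: sumr_ge0.
have d0 : 1 - w j != 0 by rewrite subr_eq0 eq_sym.
set z := \sum_i (if i == j then 0 else w i / (1 - w j)) *: s`_i.
have zc : conv s z.
  exists (fun i => if i == j then 0 else w i / (1 - w j)); split; [|split] => //.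
  - by move=> i; case: ifP => // _; rewrite divr_ge0 // subr_ge0 ltW.
  - rewrite (bigD1 j) //= eqxx add0r (eq_bigr (fun i => w i / (1 - w j))).
      have hs : \sum_(i | i != j) w i = 1 - w j by rewrite -w1' addrAC subrr add0r.
    by rewrite -mulr_suml hs divff.
    by move=> i /negbTE ->.
have xz : x = w j *: s`_j + (1 - w j) *: z.
  rewrite xD /z scaler_sumr [in RHS](bigD1 j) //= eqxx scale0r scaler0 add0r.
  congr (_ + _); apply: eq_bigr => i /negbTE ->.
  by rewrite scalerA mulrC -mulrA mulVf ?mulr1.
have := ext _ _ (w j) sjc zc; rewrite wj wjl => /(_ isT xz) ejz.
by rewrite xz -ejz -scalerDl addrC subrK scale1r mem_nth.
Qed.
Definition dseq (R : realType) m : seq 'rV[R]_m :=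
  [seq delta_mx 0 i | i : 'I_m] ++ [seq - delta_mx 0 i | i : 'I_m].

Lemma diamondE (R : realType) m : @diamond R m = conv (@dseq R m).
Proof. by []. Qed.

Lemma sign_cases (R : realType) (t : R) : t * t = 1 -> t = 1 \/ t = -1.
Proof.
move=> h; have : (t - 1) * (t + 1) = 0 by rewrite mulrDr !mulrBl h; ring.
move/eqP; rewrite mulf_eq0 => /orP[]; rewrite ?subr_eq0 ?addr_eq0 => /eqP; tauto.
Qed.

Lemma dseq_mem (R : realType) m (x : 'rV[R]_m) : x \in dseq R m ->
  exists j (t : R), t * t = 1 /\ x = t *: delta_mx 0 j.
Proof.
rewrite mem_cat => /orP[] /mapP[j _ ->]; exists j.
  by exists 1; rewrite mulr1 scale1r.
by exists (-1); rewrite mulrNN mulr1 scaleN1r.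
Qed.

Lemma dseq_memR (R : realType) m j (t : R) : t * t = 1 ->
  t *: (delta_mx 0 j : 'rV[R]_m) \in dseq R m.
Proof.
move=> /sign_cases [] ->; rewrite mem_cat; apply/orP.
  by left; rewrite scale1r; apply/mapP; exists j; rewrite ?mem_enum.
by right; rewrite scaleN1r; apply/mapP; exists j; rewrite ?mem_enum.
Qed.

Lemma ecoord (R : realType) m (i j : 'I_m) :
  (delta_mx 0 j : 'rV[R]_m) 0 i = (i == j)%:R.
Proof. by rewrite mxE eqxx. Qed.

Lemma affine_convex (R : realType) n k (P : set 'rV[R]_k) (M : 'M[R]_(n, k)) b :
  convexS P -> convexS [set x | P (x *m M + b)].
Proof.
move=> cP x y t Px Py ht; rewrite /= mulmxDl -!scalemxAl.
have -> : t *: (x *m M) + (1 - t) *: (y *m M) + b =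
  t *: (x *m M + b) + (1 - t) *: (y *m M + b).
  by rewrite !scalerDr addrACA -scalerDl subrKC scale1r.
exact: cP.
Qed.

Definition Dmat (R : realType) m k (s : R) (i : 'I_m) (u : 'rV[R]_k) : 'M[R]_(m, k) :=
  \matrix_(j, l) ((j == i)%:R * s * u 0 l).

Lemma mulDmat (R : realType) m k (x : 'rV[R]_m) M (s : R) i (u : 'rV[R]_k) :
  x *m (M + Dmat s i u) = x *m M + (s * x 0 i) *: u.
Proof.
rewrite mulmxDr; congr (_ + _); apply/matrixP => a l.
rewrite !mxE (bigD1 i) //= big1 ?addr0 ?mxE ?eqxx ?ord1.
  by rewrite mul1r mulrA [x 0 i * s]mulrC.
by move=> j /negbTE; rewrite mxE => ->; rewrite !mul0r mulr0.
Qed.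
Lemma comb_aux (R : realType) k (A y z F : 'rV[R]_k) (c t : R) :
  F = t *: y + (1 - t) *: z ->
  A = t *: (A + c *: (y - F)) + (1 - t) *: (A + c *: (z - F)).
Proof.
move=> hF.
have e : t *: (y - F) + (1 - t) *: (z - F) = 0.
  by rewrite !scalerBr addrACA -opprD -scalerDl subrKC scale1r -hF subrr.
set a := y - F in e *; set b := z - F in e *.
rewrite [t *: (A + _)]scalerDr [(1 - t) *: (A + _)]scalerDr addrACA.
rewrite -scalerDl subrKC scale1r !scalerA [t * c]mulrC [(1 - t) * c]mulrC.
by rewrite -!scalerA -scalerDr e scaler0 addr0.
Qed.
Lemma diamond_neg (R : realType) m x : @diamond R m x -> @diamond R m (- x).
Proof.
rewrite diamondE => dx.
have : conv (dseq R m) `<=` [set x | conv (dseq R m) (x *m (- 1%:M) + 0)].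
  apply: conv_sub; first by apply: affine_convex; apply: conv_convex.
  move=> y /dseq_mem [j [t [tt ->]]]; rewrite /= addr0 mulmxN mulmx1 -scaleNr.
  by apply: conv_mem; apply: dseq_memR; rewrite mulrNN.
by move=> /(_ x dx) /=; rewrite addr0 mulmxN mulmx1.
Qed.

Lemma diamond_e (R : realType) m i (s : R) : s * s = 1 ->
  @diamond R m (s *: delta_mx 0 i).
Proof. by move=> ss; rewrite diamondE; apply: conv_mem; apply: dseq_memR. Qed.

Lemma diamond0 (R : realType) m (i : 'I_m) : @diamond R m 0.
Proof.
have h1 := @diamond_e R m i 1 (mulr1 _).
have h2 := diamond_neg h1.
have := conv_convex h1 h2 (t := 2^-1); rewrite -diamondE.
have -> : 1 - 2^-1 = 2^-1 :> R by field.
rewrite scalerN subrr; apply; rewrite invr_ge0 ler0n /= invf_le1 ?ler1n //.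
Qed.

Lemma partB (R : realType) m k (P : set 'rV[R]_k) f :
  convexS P -> (forall x, P x <-> P (2%:R *: f 0 - x)) ->
  vert_hom (@diamond R m) P f ->
  forall i (s : R), s * s = 1 -> vert P (f (s *: delta_mx 0 i)).
Proof.
move=> cP sP [[[M [b fE]] fP] ext] i s ss.
set x0 := s *: (delta_mx 0 i : 'rV[R]_m).
have dx0 : @diamond R m x0 by apply: diamond_e.
have f0 : f 0 = b by rewrite fE ?mul0mx ?add0r //; apply: (diamond0 R i).
have x0i : x0 0 i = s by rewrite /x0 mxE ecoord eqxx mulr1.
split; first by apply: fP.
move=> y z t Py Pz ht feq.
pose g (u : 'rV[R]_k) x := x *m M + b + (s * x 0 i) *: u.
have gE u x : g u x = x *m (M + Dmat s i u) + b by rewrite mulDmat addrAC.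
have ghom u : P (f x0 + u) -> P (2%:R *: b - f x0 - u) -> is_hom (@diamond R m) P (g u).
  move=> P1 P2; split; first by exists (M + Dmat s i u), b => x _; apply: gE.
  have : conv (dseq R m) `<=` [set x | P (x *m (M + Dmat s i u) + b)].
    apply: conv_sub; first exact: affine_convex.
    move=> x /dseq_mem [j [tau [tt ->]]] /=; rewrite -gE /g.
    rewrite mxE ecoord.
    have [eji|nji] := eqVneq i j.
      rewrite -eji mulr1; have [te|te] : tau = s \/ tau = - s.
        have : (tau - s) * (tau + s) = 0 by rewrite mulrDr !mulrBl tt ss; ring.
        move/eqP; rewrite mulf_eq0 => /orP[]; rewrite ?subr_eq0 ?addr_eq0 => /eqP; tauto.
        by rewrite te ss scale1r -fE.
      have : f x0 = x0 *m M + b by apply: fE.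
      rewrite te scaleNr mulNmx mulrN ss scaleN1r -/x0 => fx0.
      suff -> : - (x0 *m M) + b + - u = 2%:R *: b - f x0 - u by [].
      rewrite fx0 scaler_nat mulr2n opprD !addrA; congr (_ - u).
      by rewrite -addrA [- (x0 *m M) - b]addrC addrA addrK addrC.
    rewrite !mulr0 scale0r addr0 -fE; first (apply: fP; exact: diamond_e).
    exact: diamond_e.
  by move=> h x dx; rewrite gE; apply: h; rewrite -diamondE.
have Py' : P (f x0 + (y - f x0)) by rewrite addrC subrK.
have Pz' : P (f x0 + (z - f x0)) by rewrite addrC subrK.
have Py'' : P (2%:R *: b - f x0 - (y - f x0)).
  by rewrite opprB addrA subrK -f0; exact: (proj1 (sP y) Py).
have Pz'' : P (2%:R *: b - f x0 - (z - f x0)).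
  by rewrite opprB addrA subrK -f0; exact: (proj1 (sP z) Pz).
have := ext _ _ t (ghom _ Py' Py'') (ghom _ Pz' Pz'') ht.
have key : forall x, @diamond R m x -> f x = t *: g (y - f x0) x + (1 - t) *: g (z - f x0) x.
  by move=> x dx; rewrite /g fE //; apply: comb_aux.
have fx0E : f x0 = x0 *m M + b by apply: fE.
move=> /(_ key x0 dx0); rewrite /g x0i ss !scale1r -fx0E.
by rewrite ![f x0 + _]addrC !subrK.
Qed.
Definition l1 (R : realType) m (y : 'rV[R]_m) : R := \sum_k `|y 0 k|.

Lemma l1_diamond (R : realType) m y : @diamond R m y -> l1 y <= 1.
Proof.
rewrite diamondE; move: y; apply: (@conv_sub R m (dseq R m) [set y | l1 y <= 1]).
  move=> a c t ha hc /andP[t0 t1] /=; move: ha hc => /= ha hc.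
  have H1 : l1 (t *: a + (1 - t) *: c) <= t * l1 a + (1 - t) * l1 c.
    rewrite /l1 !mulr_sumr -big_split /=; apply: ler_sum => k _.
    rewrite !mxE; apply: (le_trans (ler_normD _ _)).
    have t1' : 0 <= 1 - t by rewrite subr_ge0.
    by rewrite !normrM (ger0_norm t0) (ger0_norm t1').
  apply: (le_trans H1).
  have : t * l1 a <= t * 1 by rewrite ler_wpM2l.
  have : (1 - t) * l1 c <= (1 - t) * 1 by rewrite ler_wpM2l ?subr_ge0.
  by rewrite !mulr1 => h1 h2; apply: le_trans (lerD h2 h1) _; rewrite subrKC.
move=> x /dseq_mem [j [tau [tt ->]]] /=; rewrite /l1 (bigD1 j) //= big1 ?addr0.
  rewrite mxE ecoord eqxx mulr1.
  have : `|tau| * `|tau| = 1 by rewrite -normrM tt normr1.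
  case/sign_cases: tt => ->; by rewrite ?normrN normr1.
by move=> k /negbTE kj; rewrite mxE ecoord kj mulr0 normr0.
Qed.

Lemma coord_le_l1 (R : realType) m (y : 'rV[R]_m) i : `|y 0 i| <= l1 y.
Proof.
rewrite /l1 (bigD1 i) //= lerDl; exact: sumr_ge0.
Qed.

Lemma l1_extreme (R : realType) m (y : 'rV[R]_m) i (tau : R) :
  tau * tau = 1 -> l1 y <= 1 -> tau * y 0 i = 1 -> y = tau *: delta_mx 0 i.
Proof.
move=> tt hl hy.
have nt : `|tau| = 1 by case/sign_cases: tt => ->; rewrite ?normrN normr1.
have ny : `|y 0 i| = 1 by move: hy => /(congr1 Num.norm); rewrite normrM nt mul1r normr1.
have rest : \sum_(k | k != i) `|y 0 k| = 0.
  apply/eqP; rewrite eq_le sumr_ge0 // andbT.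
  by move: hl; rewrite /l1 (bigD1 i) //= ny -lerBrDl subrr.
apply/matrixP => a k; rewrite ord1 mxE ecoord.
have [ki|nki] := eqVneq k i.
  by rewrite ki mulr1 -[y 0 i]mul1r -tt -mulrA hy mulr1.
rewrite mulr0; apply/normr0_eq0.
exact: (psumr_eq0P (P := fun k => k != i) (fun k _ => normr_ge0 _) rest).
Qed.

Lemma vert_diamond (R : realType) m i (tau : R) : tau * tau = 1 ->
  vert (@diamond R m) (tau *: delta_mx 0 i).
Proof.
move=> tt; split; first exact: diamond_e.
move=> y z t dy dz /andP[t0 t1] e.
have hy := l1_diamond dy; have hz := l1_diamond dz.
have nt : `|tau| = 1 by case/sign_cases: tt => ->; rewrite ?normrN normr1.
have cy : tau * y 0 i <= 1.
  apply: le_trans (ler_norm _) _; rewrite normrM nt mul1r.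
  exact: le_trans (coord_le_l1 y i) hy.
have cz : tau * z 0 i <= 1.
  apply: le_trans (ler_norm _) _; rewrite normrM nt mul1r.
  exact: le_trans (coord_le_l1 z i) hz.
have ei : tau = t * y 0 i + (1 - t) * z 0 i.
  by move: e => /matrixP /(_ 0 i); rewrite !mxE !eqxx /= mulr1.
have e1 : 1 = t * (tau * y 0 i) + (1 - t) * (tau * z 0 i).
  by rewrite mulrCA [(1 - t) * _]mulrCA -mulrDr -ei tt.
have ey : tau * y 0 i = 1 by nra.
have ez : tau * z 0 i = 1 by nra.
by rewrite (l1_extreme tt hy ey) (l1_extreme tt hz ez).
Qed.
Lemma partA (R : realType) n k (P : set 'rV[R]_n) (Rr Q : set 'rV[R]_k) f :
  Rr `<=` Q -> vert_hom P Q f -> f @` P `<=` Rr -> vert_hom P Rr f.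
Proof.
move=> RQ [[aff _] ext] fR; split.
  by split=> // x Px; apply: fR; exists x.
move=> g h t [ga gR] [ha hR] ht e; apply: (ext g h t) => //.
  by split=> // x Px; apply: RQ; apply: gR.
by split=> // x Px; apply: RQ; apply: hR.
Qed.

Lemma vert_sub (R : realType) n (A B : set 'rV[R]_n) x :
  A `<=` B -> A x -> vert B x -> vert A x.
Proof.
move=> AB Ax [_ ext]; split=> // y z t Ay Az; apply: ext; exact: AB.
Qed.

Lemma image_diamond (R : realType) m k (f : 'rV[R]_m -> 'rV[R]_k) M b :
  (forall x, @diamond R m x -> f x = x *m M + b) ->
  f @` @diamond R m = conv (map (fun x => x *m M + b) (dseq R m)).
Proof.
move=> fE; apply/seteqP; split.
  move=> _ [x dx <-]; rewrite fE //; move: x dx; rewrite diamondE.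
  apply: (@conv_sub R m (dseq R m) [set x | conv _ (x *m M + b)]).
    by apply: affine_convex; apply: conv_convex.
  by move=> x xs /=; apply: conv_mem; apply: map_f.
apply: conv_sub.
  move=> _ _ t [a da <-] [c dc <-] ht.
  have dac : @diamond R m (t *: a + (1 - t) *: c).
    by rewrite diamondE; apply: conv_convex; rewrite -?diamondE.
  exists (t *: a + (1 - t) *: c) => //.
  rewrite !fE // mulmxDl -!scalemxAl.
  by rewrite !scalerDr addrACA -scalerDl subrKC scale1r.
move=> _ /mapP [x xs ->].
have dx : @diamond R m x by rewrite diamondE; apply: conv_mem.
by exists x => //; rewrite fE.
Qed.
Lemma polytope_convex (R : realType) n (P : set 'rV[R]_n) : is_polytope P -> convexS P.
Proof. by move=> [s ->]; apply: conv_convex. Qed.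

Lemma vert_diamond_inv (R : realType) m x : vert (@diamond R m) x ->
  exists j (tau : R), tau * tau = 1 /\ x = tau *: delta_mx 0 j.
Proof. by rewrite diamondE => /vert_conv /dseq_mem. Qed.

Lemma partC (R : realType) m k (P : set 'rV[R]_k) f : (0 < m)%N ->
  convexS P -> vert_hom (@diamond R m) P f ->
  f @` vert (@diamond R m) = vert (f @` @diamond R m) /\
  vert (f @` @diamond R m) `<=` vert (P `&` [set 2%:R *: f 0 - x | x in P]).
Proof.
move=> m0 cP vh; have [[M [b fE]] fP] := vh.1.
set S := P `&` [set 2%:R *: f 0 - x | x in P].
have i0 : 'I_m := Ordinal m0.
have f0 : f 0 = b by rewrite fE ?mul0mx ?add0r //; apply: (diamond0 R i0).
have SP : S `<=` P by move=> x [].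
have cS : convexS S.
  move=> x y t [Px [x' Px' ex]] [Py [y' Py' ey]] ht; split; first exact: cP.
  exists (t *: x' + (1 - t) *: y'); first exact: cP.
  rewrite -ex -ey !scalerBr addrACA -scalerDl subrKC scale1r opprD.
  by [].
have sym1 : forall x, S x -> S (2%:R *: f 0 - x).
  move=> x [Px [y Py exy]]; split.
    by rewrite -exy opprB addrC subrK.
  by exists x.
have sS : forall x, S x <-> S (2%:R *: f 0 - x).
  move=> x; split; first exact: sym1.
  by move=> /sym1; rewrite opprB addrC subrK.
have vS : vert_hom (@diamond R m) S f.
  apply: (partA SP vh) => _ [x dx <-]; split; first exact: fP.
  exists (f (- x)); first by apply: fP; apply: diamond_neg.
  have e1 := fE x dx; have e2 := fE (- x) (diamond_neg dx).
  rewrite f0 e2 e1 mulNmx scaler_nat mulr2n opprD opprK.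
  by rewrite addrC addrA subrK.
have key : forall x, vert (@diamond R m) x -> vert S (f x).
  move=> x /vert_diamond_inv [j [tau [tt ->]]]; exact: partB.
have key2 : forall x, vert (@diamond R m) x -> vert (f @` @diamond R m) (f x).
  move=> x vx; apply: (vert_sub _ _ (key x vx)).
    by move=> _ [y dy <-]; apply: vS.1.2.
  by exists x => //; case: vx.
have back : forall y, vert (f @` @diamond R m) y ->
    exists2 x, vert (@diamond R m) x & f x = y.
  move=> y; rewrite (image_diamond fE) => /vert_conv /mapP [x xs ->].
  have [j [tau [tt xe]]] := dseq_mem xs.
  exists x; first by rewrite xe; apply: vert_diamond.
  by apply: fE; rewrite diamondE; apply: conv_mem.
split.
  apply/seteqP; split; first by move=> _ [x vx <-]; apply: key2.
  by move=> y /back [x vx <-]; exists x.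
by move=> y /back [x vx <-]; apply: key.
Qed.

Unset Implicit Arguments.

Theorem corollary3p2 (R : realType) :
  (* (a) *)
  (forall (n k : nat) (P : set 'rV[R]_n) (Rr Q : set 'rV[R]_k)
          (f : 'rV[R]_n -> 'rV[R]_k),
     is_polytope P -> is_polytope Rr -> is_polytope Q -> Rr `<=` Q ->
     vert_hom P Q f -> f @` P `<=` Rr -> vert_hom P Rr f) /\
  (* (b) *)
  (forall (m k : nat) (P : set 'rV[R]_k) (f : 'rV[R]_m -> 'rV[R]_k),
     (2 <= m)%N -> is_polytope P ->
     (forall x, P x <-> P (2%:R *: f 0 - x)) ->
     vert_hom (@diamond R m) P f ->
     f @` vert (@diamond R m) `<=` vert P) /\
  (* (c) *)
  (forall (m k : nat) (P : set 'rV[R]_k) (f : 'rV[R]_m -> 'rV[R]_k),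
     (2 <= m)%N -> is_polytope P ->
     vert_hom (@diamond R m) P f ->
     f @` vert (@diamond R m) = vert (f @` @diamond R m) /\
     vert (f @` @diamond R m)
       `<=` vert (P `&` [set 2%:R *: f 0 - x | x in P])).
Proof.
split; first by move=> n k P Rr Q f _ _ _; apply: partA.
split.
  move=> m k P f _ pP sP vh _ [x /vert_diamond_inv [j [tau [tt ->]]] <-].
  exact: partB (polytope_convex pP) sP vh j tau tt.
move=> m k P f m2 pP vh; apply: partC => //; last exact: polytope_convex.
by apply: leq_trans m2.
Qed.
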